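(* Let $\Sigma=(\sigma_1,\dots,\sigma_k)$ be a uniformly primitive mixed substitution system on a finite set of prototiles $\mathcal{F}$ in $\mathbb{R}^d$. Then $\mathbb{Y}_{\Sigma,\Omega}=\mathbb{Y}_{\Sigma,w}$ for every $w\in\widetilde\Omega$.
   Context: Tiles are compact sets equal to the closure of their interior; patches are tessellations of bounded sets by tiles with pairwise disjoint interiors, tilings are tessellations of $\mathbb{R}^d$. $\mathcal{F}=\{T_1,\dots,T_n\}$ is a finite set of prototiles, a tile of type $i$ is a translate of $T_i$, and $\mathcal{F}^*$ is the set of patches of translates of prototiles up to translation. A substitution rule with inflation factor $\xi>1$ is a map $\sigma:\mathcal{F}\to\mathcal{F}^*$ with $\operatorname{supp}\sigma(T_i)=\xi T_i$, extended to patches tile by tile ($T_i+t\mapsto\sigma(T_i)+\xi t$); it is primitive if some power of its substitution matrix (entries $a_{ij}=$ number of tiles of type $i$ in $\sigma(T_j)$) is strictly positive. A mixed substitution system is a tuple $\Sigma=(\sigma_1,\dots,\sigma_k)$ of primitive substitution rules on $\mathcal{F}$. Let $\mathcal{A}=\{1,\dots,k\}$, $\Omega=\mathcal{A}^{\mathbb{N}}$, and $w(m)=(w_1,\dots,w_m)$ for $w\in\Omega$. For a finite word $a=(a_1,\dots,a_m)$ define the left action $a.P=\sigma_{a_1}(\sigma_{a_2}(\cdots\sigma_{a_m}(P)\cdots))$ and the right action $P.a=\sigma_{a_m}(\sigma_{a_{m-1}}(\cdots\sigma_{a_1}(P)\cdots))$. $\Sigma$ is uniformly primitive if there is $m_0$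 such that for every $a\in\mathcal{A}^{m_0}$ and every $T\in\mathcal{F}$ the patch $a.T$ contains tiles of all types. For $w\in\Omega$ let $\mathcal{R}_w=\{T.w(m):T\in\mathcal{F},m\in\mathbb{N}\}$, and let $\mathbb{Y}_{\Sigma,w}$ be the set of tilings $\mathcal{T}$ of $\mathbb{R}^d$ such that every finite patch of $\mathcal{T}$ is a translate of a sub-patch of some element of $\mathcal{R}_w$; $\mathbb{Y}_{\Sigma,\Omega}=\bigcup_{w\in\Omega}\mathbb{Y}_{\Sigma,w}$. $\widetilde\Omega\subset\Omega$ is the set of infinite words containing every finite word over $\mathcal{A}$ as a block of consecutive letters. *)

(* Defs.v *)
From HB Require Import structures.
From mathcomp Require Import all_boot all_order all_algebra.
From mathcomp Require Import all_classical all_reals all_analysis.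
Set Implicit Arguments. Unset Strict Implicit. Unset Printing Implicit Defensive.
Import Order.TTheory GRing.Theory Num.Theory.
Import numFieldNormedType.Exports.
Local Open Scope classical_set_scope.
Local Open Scope ring_scope.

Section Tilings.
Variables (R : realType) (d : nat).
Local Notation point := 'rV[R]_d.

Definition translate (A : set point) (t : point) : set point :=
  (fun x => x + t) @` A.
Definition dilate (xi : R) (A : set point) : set point :=
  (fun x => xi *: x) @` A.

Definition is_tile (A : set point) : Prop :=
  [/\ compact A, closure (interior A) = A & A !=set0].

Variable n : nat.
Variable T : 'I_n -> set point.

(* A tile of type i is a translate T_i + t; it is encoded by the pair (i, t). *)
Definition tile := ('I_n * point)%type.
Definition supp_tile (x : tile) : set point := translate (T x.1) x.2.
Definition shift_tile (u : point) (x : tile) : tile := (x.1, x.2 + u).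

Definition is_patch (P : seq tile) : Prop :=
  forall (p q : nat) (x y : tile), onth P p = Some x -> onth P q = Some y ->
    p <> q -> interior (supp_tile x) `&` interior (supp_tile y) = set0.

Definition supp_patch (P : seq tile) : set point :=
  \bigcup_(x in [set x | x \in P]) supp_tile x.

Definition shift_patch (u : point) (P : seq tile) : seq tile :=
  map (shift_tile u) P.

Definition is_tiling (Ti : set tile) : Prop :=
  (forall x y, Ti x -> Ti y -> x <> y ->
     interior (supp_tile x) `&` interior (supp_tile y) = set0) /\
  \bigcup_(x in Ti) supp_tile x = setT.

Definition is_subst_rule (xi : R) (sigma : 'I_n -> seq tile) : Prop :=
  1 < xi /\
  forall i, is_patch (sigma i) /\ supp_patch (sigma i) = dilate xi (T i).

Definition subst_patch (xi : R) (sigma : 'I_n -> seq tile) (P : seq tile)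
  : seq tile :=
  flatten [seq shift_patch (xi *: x.2) (sigma x.1) | x <- P].

Definition subst_matrix (sigma : 'I_n -> seq tile) : 'M[int]_n :=
  \matrix_(i < n, j < n) (count (fun x : tile => x.1 == i) (sigma j))%:Z.

Definition primitive_subst (sigma : 'I_n -> seq tile) : Prop :=
  exists p : nat, forall i j,
    0 < (iter p (mulmx (subst_matrix sigma)) 1%:M) i j.

Variable k : nat.
Variable xi : 'I_k -> R.
Variable sigma : 'I_k -> 'I_n -> seq tile.

Definition mixed_subst_system : Prop :=
  forall l, is_subst_rule (xi l) (sigma l) /\ primitive_subst (sigma l).

Definition sub_step (l : 'I_k) (P : seq tile) : seq tile :=
  subst_patch (xi l) (sigma l) P.

Definition left_act (a : seq 'I_k) (P : seq tile) : seq tile :=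
  foldr sub_step P a.
Definition right_act (P : seq tile) (a : seq 'I_k) : seq tile :=
  foldl (fun Q l => sub_step l Q) P a.

Definition proto_patch (i : 'I_n) : seq tile := [:: (i, 0)].

Definition uniformly_primitive : Prop :=
  exists m0 : nat, forall a : seq 'I_k, size a = m0 ->
    forall (i j : 'I_n), exists x, x \in left_act a (proto_patch i) /\ x.1 = j.

(* infinite words w in Omega = A^N, w(m) = (w_1, ..., w_m) *)
Definition prefix_word (w : nat -> 'I_k) (m : nat) : seq 'I_k :=
  map w (iota 0 m).

Definition R_w (w : nat -> 'I_k) : set (seq tile) :=
  [set P | exists (i : 'I_n) (m : nat), P = right_act (proto_patch i) (prefix_word w m)].

Definition Y_w (w : nat -> 'I_k) : set (set tile) :=
  [set Ti | is_tiling Ti /\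
    forall P : seq tile, (forall x, x \in P -> Ti x) ->
      exists Q t, R_w w Q /\ forall x, x \in P -> shift_tile t x \in Q].

Definition Y_Omega : set (set tile) :=
  \bigcup_(w in [set: nat -> 'I_k]) Y_w w.

Definition Omega_tilde : set (nat -> 'I_k) :=
  [set w | forall s : seq 'I_k, exists j : nat,
     forall l, (l < size s)%N -> w (j + l)%N = nth (w 0%N) s l].

End Tilings.

(* Main.v *)
Require Import Defs.
From HB Require Import structures.
From mathcomp Require Import all_boot all_order all_algebra.
From mathcomp Require Import all_classical all_reals all_analysis.
Local Open Scope classical_set_scope.
Local Open Scope ring_scope.
Import GRing.Theory.
Set Implicit Arguments. Unset Strict Implicit.

Definition incl (R : realType) (d n : nat) (P P' : seq (tile R d n)) :=
  exists u, forall x, x \in P -> shift_tile u x \in P'.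

Lemma incl_trans (R : realType) (d n : nat) (P1 P2 P3 : seq (tile R d n)) :
  incl P1 P2 -> incl P2 P3 -> incl P1 P3.
Proof.
move=> [u Hu] [v Hv]; exists (u + v) => x /Hu /Hv.
by rewrite /shift_tile /= addrA.
Qed.

Lemma sub_step_incl (R : realType) (d n k : nat) (xi : 'I_k -> R)
  (sigma : 'I_k -> 'I_n -> seq (tile R d n)) l (P P' : seq (tile R d n)) :
  incl P P' -> incl (sub_step xi sigma l P) (sub_step xi sigma l P').
Proof.
move=> [u Hu]; exists (xi l *: u) => y.
rewrite /sub_step /subst_patch => /flattenP [s /mapP [x xP ->] ys].
apply/flattenP; exists (shift_patch (xi l *: (shift_tile u x).2) (sigma l (shift_tile u x).1)).
  by apply/mapP; exists (shift_tile u x) => //; apply: Hu.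
move: ys => /mapP [z zin ->]; apply/mapP; exists z => //.
by rewrite /shift_tile /= scalerDr addrA.
Qed.

Lemma right_act_incl (R : realType) (d n k : nat) (xi : 'I_k -> R)
  (sigma : 'I_k -> 'I_n -> seq (tile R d n)) a (P P' : seq (tile R d n)) :
  incl P P' -> incl (right_act xi sigma P a) (right_act xi sigma P' a).
Proof.
elim: a P P' => [|l a IH] P P' H //=.
by apply: IH; apply: sub_step_incl.
Qed.

Lemma mem_incl (R : realType) (d n : nat) (x : tile R d n) P :
  x \in P -> incl (@proto_patch R d n x.1) P.
Proof.
move=> xP; exists x.2 => y; rewrite inE => /eqP ->.
by rewrite /shift_tile /= add0r -surjective_pairing.
Qed.

Lemma prefix_word_add k (w : nat -> 'I_k) J s :
  (forall l, (l < size s)%N -> w (J + l)%N = nth (w 0%N) s l) ->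
  prefix_word w (J + size s) = prefix_word w J ++ s.
Proof.
move=> H; rewrite /prefix_word iotaD map_cat add0n; congr (_ ++ _).
apply: (@eq_from_nth _ (w 0%N)); first by rewrite size_map size_iota.
move=> i; rewrite size_map size_iota => Hi.
by rewrite (nth_map 0%N) ?size_iota // nth_iota // H.
Qed.

Lemma sigma_nonempty (R : realType) (d n : nat) (T : 'I_n -> set 'rV[R]_d)
  (k : nat) (xi : 'I_k -> R) (sigma : 'I_k -> 'I_n -> seq (tile R d n)) :
  (forall i, is_tile (T i)) -> mixed_subst_system T xi sigma ->
  forall l i, exists z, z \in sigma l i.
Proof.
move=> HT Hm l i; case E: (sigma l i) => [|z s]; last by exists z; rewrite inE eqxx.
exfalso; have [_ Hs] := ((Hm l).1.2 i).
move: (HT i) => [_ _ [x0 Tx0]].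
have : dilate (xi l) (T i) (xi l *: x0) by exists x0.
by rewrite -Hs E => -[y]; rewrite /= in_nil.
Qed.

Lemma right_act_nonempty (R : realType) (d n : nat) (T : 'I_n -> set 'rV[R]_d)
  (k : nat) (xi : 'I_k -> R) (sigma : 'I_k -> 'I_n -> seq (tile R d n)) :
  (forall i, is_tile (T i)) -> mixed_subst_system T xi sigma ->
  forall a P, (exists x, x \in P) -> exists x, x \in right_act xi sigma P a.
Proof.
move=> HT Hm; elim=> [|l a IH] P [x xP] /=; first by exists x.
apply: IH; have [z zin] := sigma_nonempty HT Hm l x.1.
exists (shift_tile (xi l *: x.2) z); apply/flattenP.
exists (shift_patch (xi l *: x.2) (sigma l x.1)); first by apply/mapP; exists x.
by apply/mapP; exists z.
Qed.

Theorem lemma6p1 (R : realType) (d n : nat) (T : 'I_n -> set 'rV[R]_d)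
  (k : nat) (xi : 'I_k -> R) (sigma : 'I_k -> 'I_n -> seq (tile R d n)) :
  (forall i, is_tile (T i)) ->
  mixed_subst_system T xi sigma ->
  uniformly_primitive xi sigma ->
  forall w, Omega_tilde w -> Y_Omega T xi sigma = Y_w T xi sigma w.
Proof.
move=> HT Hm [m0 Hup] w Hw; apply/seteqP; split; last first.
  by move=> Ti H; exists w.
move=> Ti [v _ [Htil HP]]; split => // P HPTi.
have [Q [t [[i [m ->]] Ht]]] := HP P HPTi.
pose a := nseq m0 (w 0%N).
pose s := rev a ++ prefix_word v m.
have [J HJ] := Hw s.
exists (right_act xi sigma (proto_patch R d i) (prefix_word w (J + size s))).
suff [u Hu] : incl (right_act xi sigma (proto_patch R d i) (prefix_word v m))
   (right_act xi sigma (proto_patch R d i) (prefix_word w (J + size s))).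
  exists (t + u); split; first by exists i, (J + size s).
  move=> x /Ht /Hu; by rewrite /shift_tile /= addrA.
rewrite prefix_word_add // /right_act foldl_cat foldl_cat -/(right_act _ _ _ _).
set X := right_act xi sigma (proto_patch R d i) (prefix_word w J).
apply: right_act_incl.
have [x xX] := right_act_nonempty HT Hm (prefix_word w J)
  (ex_intro _ (i, 0) (mem_head _ _) : exists x, x \in proto_patch R d i).
have [y [yin yi]] := Hup a (size_nseq _ _) x.1 i.
have Hl : forall P0, left_act xi sigma a P0 = right_act xi sigma P0 (rev a).
  by move=> P0; rewrite /right_act foldl_rev.
apply: (incl_trans (P2 := left_act xi sigma a (proto_patch R d x.1))).
  by rewrite -yi; apply: mem_incl.
rewrite Hl; apply: right_act_incl; exact: mem_incl.
Qed.
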